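(* Let $X$ and $Y$ be non-discrete Tychonoff spaces which both have $P$-number $\tau$, and suppose each of $X$ and $Y$ has a $\tau$-discrete basis of clopen sets (a base for the topology consisting of clopen sets that is a union of $\tau$ many discrete families). Then the $P$-number of $X\times Y$ is $\tau$, and $X\times Y$ has a $\tau$-discrete basis of clopen sets.
   Context: All spaces are Tychonoff. The $P$-number of a space $Z$ is $|Z|$ if $Z$ is discrete; otherwise it is the largest cardinal $\tau$ such that the intersection of any family of fewer than $\tau$ open subsets of $Z$ is open. A family of subsets of $Z$ is discrete if every point of $Z$ has a neighborhood meeting at most one member of the family. A $\tau$-discrete basis is a base of the form $\bigcup_{\alpha<\tau}\mathcal B_\alpha$ with each $\mathcal B_\alpha$ a discrete family. *)

(* Defs.v *)
From mathcomp Require Import all_boot all_algebra.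
From mathcomp Require Import all_classical all_reals all_analysis.
Set Implicit Arguments. Unset Strict Implicit. Unset Printing Implicit Defensive.
Local Open Scope classical_set_scope.

Definition tychonoff_space (T : topologicalType) : Prop :=
  completely_regular_space T /\ accessible_space T.

Definition discrete_top (T : topologicalType) : Prop :=
  forall x : T, open [set x].

Definition card_lt T U (A : set T) (B : set U) : Prop :=
  (A #<= B)%card /\ ~ (B #<= A)%card.

Definition inter_lt_open (Z : topologicalType) (K : Type) : Prop :=
  forall F : set (set Z), card_lt F [set: K] ->
    (forall A, F A -> open A) -> open (\bigcap_(A in F) A).

Definition pnumber_is (Z : topologicalType) (Tau : Type) : Prop :=
  (discrete_top Z /\ ([set: Z] #= [set: Tau])%card) \/
  (~ discrete_top Z /\ inter_lt_open Z Tau /\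
     forall K : Type, inter_lt_open Z K -> ([set: K] #<= [set: Tau])%card).

Definition discrete_family (Z : topologicalType) (F : set (set Z)) : Prop :=
  forall z : Z, exists N, nbhs z N /\
    forall A B, F A -> F B -> N `&` A !=set0 -> N `&` B !=set0 -> A = B.

Definition is_base (Z : topologicalType) (B : set (set Z)) : Prop :=
  (forall A, B A -> open A) /\
  forall (U : set Z) (x : Z), open U -> U x -> exists A, [/\ B A, A x & A `<=` U].

Definition tau_discrete_clopen_base (Z : topologicalType) (Tau : Type) : Prop :=
  exists Bs : Tau -> set (set Z),
    [/\ forall a, discrete_family (Bs a),
        forall a A, Bs a A -> clopen A &
        is_base (\bigcup_(a in [set: Tau]) Bs a)].

(* Main.v *)
Require Import Defs.
From mathcomp Require Import all_boot all_algebra.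
From mathcomp Require Import all_classical all_reals all_analysis.
From mathcomp Require wochoice.
Set Implicit Arguments. Unset Strict Implicit. Unset Printing Implicit Defensive.
Local Open Scope classical_set_scope.
Local Open Scope card_scope.

Lemma inj_le T U (A : set T) (B : set U) (f : T -> U) :
  {in A &, injective f} -> f @` A `<=` B -> A #<= B.
Proof.
move=> fi fAB; apply: (@card_le_trans _ _ _ (f @` A)).
  by have := inj_card_eq fi; rewrite card_eq_sym card_eq_le => /andP[].
exact: subset_card_le.
Qed.

Lemma add1_le (T : pointedType) (S : set T) c : ~ S c -> infinite_set S ->
  S `|` [set c] #<= S.
Proof.
move=> nSc /infiniteP /pcard_leP/injfunPex [g gS ginj].
have [ginv ginvE] : {ginv : T -> nat & forall x, range g x -> g (ginv x) = x}.
  apply: (@choice _ _ (fun x n => range g x -> g n = x)) => x; case: (pselect (range g x)) => [[n _ <-]|nr]; [by exists n|by exists 0%N].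
pose h x := if `[< x = c >] then g 0%N else if `[< range g x >] then g (ginv x).+1 else x.
apply: (@inj_le _ _ _ _ h).
- move=> x y; rewrite !inE => Hx Hy; rewrite /h.
  have gi : forall m n, g m = g n -> m = n by move=> m n; apply: ginj; rewrite inE.
  case: (asboolP (x = c)) => xc; case: (asboolP (y = c)) => yc; try by rewrite xc yc.
  + case: (asboolP (range g y)) => ry.
      by move=> /gi.
    by move=> gy; exfalso; apply: ry; exists 0%N.
  + case: (asboolP (range g x)) => rx.
      by move=> /gi.
    by move=> gx; exfalso; apply: rx; exists 0%N.
  + case: (asboolP (range g x)) => rx; case: (asboolP (range g y)) => ry.
    * move=> /gi [] e.
      by rewrite -(ginvE _ rx) -(ginvE _ ry) e.
    * by move=> gx; exfalso; apply: ry; exists (ginv x).+1.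
    * by move=> gx; exfalso; apply: rx; exists (ginv y).+1.
    * by [].
- move=> _ [x Hx <-]; rewrite /h.
  case: (asboolP (x = c)) => xc; first exact: gS.
  case: (asboolP (range g x)) => rx; first exact: gS.
  by case: Hx.
Qed.

Lemma index_cover (T : Type) : infinite_set [set: T] ->
  exists S : T -> set T, (forall c, ~ ([set: T] #<= S c)) /\
    (forall a b, exists c, S c a /\ S c b).
Proof.
elim/Ppointed: T => T.
  by move=> inf; exfalso; have [x _] := infinite_setN0 inf; exact: (no x).
move=> Tinf.
have [R Rwo] := wochoice.well_ordering_principle T.
have Rmin : forall A : {pred T}, wochoice.nonempty A -> exists z, z \in A /\ forall x, x \in A -> R z x.
  move=> A /Rwo [z []]; rewrite /wochoice.minimum_of /wochoice.lower_bound => -[zA zlb] _; exists z; split=> // x xA; exact: zlb.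
have Rrefl : forall x, R x x.
  move=> x; have [|z [zA zlb]] := Rmin (pred1 x); first by exists x; rewrite inE.
  by move: zA; rewrite inE => /eqP ze; have := zlb x; rewrite inE eqxx ze; apply.
have Rtot : forall x y, R x y \/ R y x.
  move=> x y; have [|z [zA zlb]] := Rmin [pred w | (w == x) || (w == y)].
    by exists x; rewrite inE eqxx.
  move: zA; rewrite inE => /orP [/eqP ze|/eqP ze]; subst z.
    by left; apply: zlb; rewrite inE eqxx orbT.
  by right; apply: zlb; rewrite inE eqxx.
have Ranti : forall x y, R x y -> R y x -> x = y.
  move=> x y Rxy Ryx.
  have [|z [[zA zlb] zuniq]] := Rwo [pred w | (w == x) || (w == y)].
    by exists x; rewrite inE eqxx.
  have ex : z = x.
    by apply: zuniq; split; [rewrite inE eqxx|move=> w; rewrite inE => /orP[/eqP->|/eqP->]].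
  have ey : z = y.
    by apply: zuniq; split; [rewrite inE eqxx orbT|move=> w; rewrite inE => /orP[/eqP->|/eqP->]].
  by rewrite -ex -ey.
pose big c := [set: T] #<= [set d | R d c].
have [nobig|hasbig] := pselect (forall c, ~ big c).
  exists (fun c => [set d | R d c]); split => // a b.
  by case: (Rtot a b) => ?; [exists b|exists a]; split => //; apply: Rrefl.
move/existsNP: hasbig => [c1 /contrapT bc1].
have [|c0 [bc0 c0min]] := Rmin [pred c | big c].
  by exists c1.
have {}bc0 : big c0 := bc0.
have {}c0min : forall x, big x -> R c0 x.
  by move=> x bx; apply: c0min.
pose S0 := [set d | R d c0 /\ d <> c0].
have le1 : [set: T] #<= S0 `|` [set c0].
  apply: card_le_trans bc0 (subset_card_le _) => d /= Rd.
  by case: (pselect (d = c0)) => e; [right|left].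
have nS0 : ~ S0 c0 by case.
have S0inf : infinite_set S0.
  move=> fin; apply: Tinf; apply: card_le_finite le1 _.
  by rewrite finite_setU; split => //; exact: finite_set1.
have /pcard_leP/injfunPex [i iS iinj] := card_le_trans le1 (add1_le nS0 S0inf).
exists (fun c => [set a | R (i a) (i c)]); split.
  move=> c Hc.
  have bic : big (i c).
    apply: card_le_trans Hc (@inj_le _ _ _ _ i _ _).
      by move=> x y _ _; apply: iinj; rewrite inE.
    by move=> _ [a Ha <-].
  have [R1 ne] := iS c I.
  by apply: ne; apply: Ranti R1 (c0min _ bic).
by move=> a b; case: (Rtot (i a) (i b)) => ?; [exists b|exists a]; split => //; apply: Rrefl.
Qed.
Lemma open_openP (Z : topologicalType) (A : set Z) :
  (forall x, A x -> nbhs x A) -> open A.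
Proof. by move=> H; rewrite openE => x /H. Qed.

Lemma openX_ (X Y : topologicalType) (A : set X) (B : set Y) :
  open A -> open B -> open (A `*` B).
Proof.
move=> oA oB; apply: open_openP => -[x y] [/= Ax By].
exists (A, B) => //; split; apply: open_nbhs_nbhs; split => //.
Qed.

Lemma nbhs_prodP (X Y : topologicalType) (p : X * Y) (W : set (X * Y)) :
  nbhs p W -> exists U V, [/\ nbhs p.1 U, nbhs p.2 V & U `*` V `<=` W].
Proof. by move=> [[U V] [/= nU nV] sW]; exists U, V. Qed.

Lemma bigcap_seq_open (Z : topologicalType) (s : seq (set Z)) :
  (forall C, C \in s -> open C) -> open (\bigcap_(C in [set` s]) C).
Proof.
elim: s => [|C s IH] H.
  have -> : \bigcap_(C in [set` [::]]) C = [set: Z] by apply/seteqP; split => // z _ C; rewrite /= in_nil.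
  exact: openT.
have -> : \bigcap_(D in [set` C :: s]) D = C `&` \bigcap_(D in [set` s]) D.
  apply/seteqP; split => z.
    move=> Hz; split; first by apply: Hz; rewrite /= in_cons eqxx.
    by move=> D Ds; apply: Hz; rewrite /= in_cons Ds orbT.
  move=> [Cz Hz] D; rewrite /= in_cons => /orP [/eqP ->|Ds] //.
  exact: Hz.
apply: openI; first by apply: H; rewrite in_cons eqxx.
by apply: IH => D Ds; apply: H; rewrite in_cons Ds orbT.
Qed.

Lemma inter_lt_open_nat (Z : topologicalType) : inter_lt_open Z nat.
Proof.
move=> F [_ nF] Fo.
have /finite_seqP [s Fs] : finite_set F by apply/finite_setPn.
rewrite Fs; apply: bigcap_seq_open => C Cs; apply: Fo; rewrite Fs; exact: Cs.
Qed.

Lemma class_discrete (Z : topologicalType) (E : Z -> Z -> Prop) :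
  (forall x, E x x) -> (forall x y z, E x y -> E x z -> E y z) ->
  (forall x, open [set z | E x z]) ->
  discrete_family [set [set z | E x z] | x in [set: Z]] /\
  (forall x, clopen [set z | E x z]).
Proof.
move=> Er Ee Eo.
have Es x y : E x y -> E y x by move=> /Ee; apply; apply: Er.
have Et x y z : E x y -> E y z -> E x z by move=> /Es /Ee; apply.
have cl y z : E y z -> [set w | E y w] = [set w | E z w].
  move=> Eyz; apply/seteqP; split => w /=; [exact: Ee|exact: Et].
split.
  move=> z; exists [set w | E z w]; split; first by apply: open_nbhs_nbhs; split.
  move=> _ _ [a _ <-] [b _ <-] [w [Ezw Eaw]] [v [Ezv Ebv]].
  by rewrite (cl _ _ (Et _ _ _ Eaw (Es _ _ Ezw))) (cl _ _ (Et _ _ _ Ebv (Es _ _ Ezv))).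
move=> x; split => //; rewrite -openC; apply: open_openP => w nw.
apply: (@filterS _ _ _ [set v | E w v]); last by apply: open_nbhs_nbhs; split.
by move=> v Ewv Exv; apply: nw; apply: Et Exv (Es _ _ Ewv).
Qed.

Lemma cell_open (Z : topologicalType) (F : set (set Z)) :
  discrete_family F -> (forall A, F A -> clopen A) ->
  forall x, open [set z | forall A, F A -> (A x <-> A z)].
Proof.
move=> dF cF x; apply: open_openP => z Hz.
suff : nbhs z [set w | forall A, F A -> (A z <-> A w)].
  apply: filterS => w Hw A FA; rewrite (Hz A FA); exact: Hw.
have [N [nN uN]] := dF z.
have [[A0 FA0 A0z]|nA] := pselect (exists2 A0, F A0 & A0 z).
  apply: (@filterS _ _ _ (N `&` A0)); last first.
    by apply: filterI => //; apply: open_nbhs_nbhs; split => //; case: (cF _ FA0).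
  move=> w [Nw A0w] A FA; split => HA.
    by rewrite (uN A A0 FA FA0 _ _) //; [exists z; split => //; exact: nbhs_singleton|exists z; split => //; exact: nbhs_singleton].
  by rewrite (uN A A0 FA FA0 _ _) //; [exists w|exists w].
have {}nA : forall A, F A -> ~ A z by move=> A FA Az; apply: nA; exists A.
have [[A1 FA1 [v NA1v]]|nM] := pselect (exists2 A1, F A1 & N `&` A1 !=set0).
  apply: (@filterS _ _ _ (N `&` ~` A1)); last first.
    apply: filterI => //; apply: open_nbhs_nbhs; split; last exact: nA.
    by rewrite openC; case: (cF _ FA1).
  move=> w [Nw nA1w] A FA; split => HA; first by case: (nA _ FA).
  by exfalso; apply: nA1w; rewrite -(uN A A1 FA FA1 _ _) //; [exists w|exists v].
apply: filterS nN => w Nw A FA; split => HA; first by case: (nA _ FA).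
by exfalso; apply: nM; exists A => //; exists w.
Qed.

Lemma class_open (Z : topologicalType) (Tau : Type) (Bs : Tau -> set (set Z))
    (S : set Tau) :
  inter_lt_open Z Tau -> ~ ([set: Tau] #<= S) ->
  (forall a, discrete_family (Bs a)) -> (forall a A, Bs a A -> clopen A) ->
  forall x, open [set z | forall a, S a -> forall A, Bs a A -> (A x <-> A z)].
Proof.
move=> Hint small dB cB x.
pose F := [set [set z | forall A, Bs a A -> (A x <-> A z)] | a in S].
have -> : [set z | forall a, S a -> forall A, Bs a A -> (A x <-> A z)] =
    \bigcap_(C in F) C.
  apply/seteqP; split => z.
    by move=> Hz C [a Sa <-]; exact: Hz a Sa.
  by move=> Hz a Sa A BA; exact: (Hz _ (ex_intro2 _ _ a Sa erefl)).
apply: Hint.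
  split; first exact: card_le_trans (card_image_le _ _) (subset_card_le (subsetT _)).
  by move=> H; apply: small; apply: card_le_trans H (card_image_le _ _).
by move=> C [a Sa <-]; exact: (cell_open (dB a) (@cB a)).
Qed.

Theorem lemma2p2 (X Y : topologicalType) (Tau : Type) :
  tychonoff_space X -> tychonoff_space Y ->
  ~ discrete_top X -> ~ discrete_top Y ->
  pnumber_is X Tau -> pnumber_is Y Tau ->
  tau_discrete_clopen_base X Tau -> tau_discrete_clopen_base Y Tau ->
  pnumber_is (X * Y)%type Tau /\ tau_discrete_clopen_base (X * Y)%type Tau.
Proof.
move=> _ _ ndX ndY pX pY [BX [dBX cBX bBX]] [BY [dBY cBY bBY]].
have [[dX _]|[_ [intX maxX]]] := pX; first by case: ndX.
have [[dY _]|[_ [intY maxY]]] := pY; first by case: ndY.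
have Tinf : infinite_set [set: Tau].
  by apply/infiniteP; apply: maxX; exact: inter_lt_open_nat.
have [y0 _] : exists y : Y, True.
  apply: contrapT => nY; apply: ndY => y; exfalso; apply: nY; by exists y.
split.
  right; split; [|split].
  - move=> dP; apply: ndX => x; apply: open_openP => _ ->.
    have /nbhs_prodP [U [V [nU nV sUV]]] : nbhs (x, y0) [set (x, y0)].
      by apply: open_nbhs_nbhs; split.
    apply: filterS nU => u Uu.
    have := sUV (u, y0) (conj Uu (nbhs_singleton nV)).
    by case.
  - move=> F [FT nTF] Fo; apply: open_openP => p Hp.
    have [g Hg] : {g : set (X * Y) -> set X * set Y & forall W, F W ->
        [/\ open (g W).1, open (g W).2, (g W).1 p.1, (g W).2 p.2 &
            (g W).1 `*` (g W).2 `<=` W]}.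
      apply: (@choice _ _ (fun W UV => F W -> [/\ open UV.1, open UV.2, UV.1 p.1, UV.2 p.2 &
            UV.1 `*` UV.2 `<=` W])) => W.
      case: (pselect (F W)) => FW; last by exists (setT, setT).
      have /nbhs_prodP [U [V [nU nV sUV]]] : nbhs p W.
        by apply: open_nbhs_nbhs; split; [exact: Fo|exact: Hp].
      exists (U°, V°) => _; split => //=; try exact: open_interior.
      + by move=> q [/interior_subset ? /interior_subset ?]; apply: sUV.
    pose FX := [set (g W).1 | W in F]; pose FY := [set (g W).2 | W in F].
    have cX : card_lt FX [set: Tau].
      split; first exact: card_le_trans (card_image_le _ _) FT.
      by move=> H; apply: nTF; apply: card_le_trans H (card_image_le _ _).
    have cY : card_lt FY [set: Tau].
      split; first exact: card_le_trans (card_image_le _ _) FT.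
      by move=> H; apply: nTF; apply: card_le_trans H (card_image_le _ _).
    have oX : open (\bigcap_(C in FX) C).
      by apply: intX cX _ => _ [W FW <-]; case: (Hg W FW).
    have oY : open (\bigcap_(C in FY) C).
      by apply: intY cY _ => _ [W FW <-]; case: (Hg W FW).
    apply: (@filterS _ _ _ ((\bigcap_(C in FX) C) `*` (\bigcap_(C in FY) C))).
      move=> q [qX qY] W FW; have [_ _ _ _ sub] := Hg W FW; apply: sub; split.
        by apply: qX; exists W.
      by apply: qY; exists W.
    apply: open_nbhs_nbhs; split; first exact: openX_.
    by split => _ [W FW <-]; case: (Hg W FW).
  - move=> K intK; apply: maxX => F [FK nKF] Fo.
    pose G := [set A `*` [set: Y] | A in F].
    have oG : open (\bigcap_(C in G) C).
      apply: intK.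
        split; first exact: card_le_trans (card_image_le _ _) FK.
        by move=> H; apply: nKF; apply: card_le_trans H (card_image_le _ _).
      by move=> _ [A FA <-]; apply: openX_; [exact: Fo|exact: openT].
    apply: open_openP => x Hx.
    have /nbhs_prodP [U [V [nU nV sUV]]] : nbhs (x, y0) (\bigcap_(C in G) C).
      apply: open_nbhs_nbhs; split => // _ [A FA <-]; split => //; exact: Hx.
    apply: filterS nU => u Uu A FA.
    have := sUV (u, y0) (conj Uu (nbhs_singleton nV)) (A `*` [set: Y]).
    by case => //; exists A.
have [S [Ssmall Spair]] := index_cover Tinf.
pose EX c (x z : X) := forall a, S c a -> forall A, BX a A -> (A x <-> A z).
pose EY c (x z : Y) := forall a, S c a -> forall A, BY a A -> (A x <-> A z).
pose EP c (p q : X * Y) := EX c p.1 q.1 /\ EY c p.2 q.2.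
have key c : discrete_family [set [set q | EP c p q] | p in [set: X * Y]] /\
    (forall p, clopen [set q | EP c p q]).
  apply: class_discrete.
  - by move=> p; split => a _ A _.
  - move=> p q r [Hq1 Hq2] [Hr1 Hr2]; split => a Sa A BA.
      by rewrite -(Hq1 a Sa A BA) (Hr1 a Sa A BA).
    by rewrite -(Hq2 a Sa A BA) (Hr2 a Sa A BA).
  - move=> p; apply: openX_.
      exact: (class_open intX (Ssmall c) dBX cBX).
    exact: (class_open intY (Ssmall c) dBY cBY).
exists (fun c => [set [set q | EP c p q] | p in [set: X * Y]]); split.
- by move=> c; case: (key c).
- by move=> c _ [p _ <-]; case: (key c).
- split.
    by move=> _ [c _ [p _ <-]]; case: (key c) => _ /(_ p) [].
  move=> W p oW Wp.
  have /nbhs_prodP [U [V [nU nV sUV]]] : nbhs p W by apply: open_nbhs_nbhs.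
  have [A [[a _ BAa] Ap1 AU]] := bBX.2 _ p.1 (@open_interior _ U)
      (nbhs_singleton (nbhs_interior nU)).
  have [B [[b _ BBb] Bp2 BV]] := bBY.2 _ p.2 (@open_interior _ V)
      (nbhs_singleton (nbhs_interior nV)).
  have [c [Sca Scb]] := Spair a b.
  exists [set q | EP c p q]; split.
  + by exists c => //; exists p.
  + by split => a' _ A' _.
  + move=> q [Hq1 Hq2]; apply: sUV; split.
      by apply: interior_subset; apply: AU; rewrite -(Hq1 a Sca A BAa).
    by apply: interior_subset; apply: BV; rewrite -(Hq2 b Scb B BBb).
Qed.
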